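(* Let $m\ge 2$ be an integer with smallest prime factor $p$, and let $k$ and $d$ be positive integers such that $d<\tfrac{p(m-1)}{m(m-k)}$ (equivalently $d\,m(m-k)<p(m-1)$). Let $S\subseteq\{0,1,\dots,m-1\}$ with $|S|=k$ and let $A=S+m\mathbb{Z}=\{s+mn: s\in S,\ n\in\mathbb{Z}\}$. Then \[h(A^d)\le k^d.\]
   Context: For a set $X\subseteq\mathbb{R}^d$, the Helly number $h(X)$ is the smallest $h$ such that the following holds: for every finite family $\mathcal{F}$ of convex sets in $\mathbb{R}^d$, if every $h$ or fewer sets of $\mathcal{F}$ have a point of $X$ in their intersection, then the intersection of all sets of $\mathcal{F}$ contains a point of $X$. If no such $h$ exists, $h(X)=\infty$. $A^d$ denotes the $d$-fold Cartesian product of $A$. *)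

(* Defs.v *)
From HB Require Import structures.
From mathcomp Require Import all_boot all_order all_algebra.
From mathcomp Require Import classical_sets reals.
Set Implicit Arguments. Unset Strict Implicit. Unset Printing Implicit Defensive.
Import Order.TTheory GRing.Theory Num.Theory.
Local Open Scope ring_scope.
Local Open Scope classical_set_scope.

Definition convex_set (R : realType) (d : nat) (C : set 'rV[R]_d) : Prop :=
  forall x y : 'rV[R]_d, C x -> C y ->
    forall t : R, 0 <= t -> t <= 1 -> C (t *: x + (1 - t) *: y).

Definition helly_prop (R : realType) (d : nat) (X : set 'rV[R]_d) (h : nat)
  : Prop :=
  forall (n : nat) (F : 'I_n -> set 'rV[R]_d),
    (forall i, convex_set (F i)) ->
    (forall I : {set 'I_n}, (#|I| <= h)%N ->
       exists x, X x /\ forall i, i \in I -> F i x) ->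
    exists x, X x /\ forall i, F i x.

(* h(X) <= b, where h(X) is the least h satisfying helly_prop (or infinity). *)
Definition helly_number_le (R : realType) (d : nat) (X : set 'rV[R]_d)
  (b : nat) : Prop :=
  exists h : nat, (h <= b)%N /\ helly_prop X h.

Definition residue_set (R : realType) (m : nat) (S : {set 'I_m}) : set R :=
  [set r | exists (s : 'I_m) (z : int), s \in S /\ r = (s%:R + m%:R * z%:~R)].

Definition cart_pow (R : realType) (d : nat) (A : set R) : set 'rV[R]_d :=
  [set x | forall i : 'I_d, A (x ord0 i)].

(* Main.v *)
Require Import Defs.
From HB Require Import structures.
From mathcomp Require Import all_boot all_order all_algebra.
From mathcomp Require Import classical_sets reals.
From mathcomp Require Import boolp.
From mathcomp Require Import ring lra zify.
Set Implicit Arguments. Unset Strict Implicit. Unset Printing Implicit Defensive.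
Import Order.TTheory GRing.Theory Num.Theory.

Section NT.
Variables (m : nat) (m0 : 0 < m).

Definition res (s j w : nat) : 'I_m := Ordinal (ltn_pmod (s + j * w) m0).

Lemma badcount k (S : {set 'I_m}) (s w : nat) :
  #|S| = k -> (s < m) -> Ordinal (ltn_pmod s m0) \in S -> w < m ->
  pdiv m * #|[set j : 'I_m | (0 < j) && (res s j w \notin S)]%SET| <= (m - k) * m.
Proof.
move=> cS sm sS wm.
have [->|w0] := posnP w.
  set B := [set j : 'I_m | _]%SET.
  suff -> : B = finset.set0 by rewrite cards0 muln0.
  apply/setP => j; rewrite !inE.
  suff -> : res s j 0 = Ordinal (ltn_pmod s m0) by rewrite sS andbF.
  by apply: val_inj; rewrite /= muln0 addn0.
set B := [set j : 'I_m | _]%SET.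
set g := gcdn w m.
have g0 : 0 < g by rewrite gcdn_gt0 w0.
have gw : g <= w by apply: dvdn_leq => //; exact: dvdn_gcdl.
set M := m %/ g.
have mMg : m = M * g by rewrite divnK //; exact: dvdn_gcdr.
have M0 : 0 < M by move: m0; rewrite mMg muln_gt0 => /andP[].
have M1 : 1 < M.
  rewrite ltn_neqAle M0 andbT; apply/eqP => M1.
  by move: wm; rewrite mMg -M1 mul1n => gwm; move: (leq_ltn_trans gw gwm); rewrite ltnn.
have pM : pdiv m <= M by apply: pdiv_min_dvd M1 _; rewrite mMg dvdn_mulr.
have divlt (j : 'I_m) : j %/ M < g by rewrite ltn_divLR // mulnC -mMg.
pose f (j : 'I_m) := (res s j w, Ordinal (divlt j)).
have emod : forall j1 j2 : 'I_m, (s + j1 * w) %% m = (s + j2 * w) %% m -> j1 = j2 %[mod M].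
  move=> j1 j2 e1'.
  wlog le12 : j1 j2 e1' / j1 <= j2.
    move=> H; have [le|le] := leqP j1 j2; first exact: H.
    by apply/esym/H => //; exact: ltnW.
  apply/esym/eqP; rewrite eqn_mod_dvd //.
  have : m %| (j2 - j1) * w.
    move/eqP: e1'; rewrite eq_sym eqn_modDl eqn_mod_dvd ?leq_mul2r ?le12 ?orbT //.
    by rewrite mulnBl.
  move=> h.
  have h2 : m %| gcdn ((j2 - j1) * w) ((j2 - j1) * m) by rewrite dvdn_gcd h dvdn_mull.
  move: h2; rewrite -muln_gcdr -/g {1}mMg.
  by rewrite dvdn_pmul2r.
have finj : injective f.
  move=> j1 j2 [e1 e2].
  apply: ord_inj; rewrite (divn_eq j1 M) (divn_eq j2 M) (emod _ _ e1).
  by rewrite e2.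
have sub : f @: B \subset finset.setX (~: S) [set: 'I_g]%SET.
  apply/fintype.subsetP => _ /imsetP[j jB ->]; rewrite !inE /=.
  by move: jB; rewrite inE andbT => /andP[].
have := subset_leq_card sub; rewrite card_imset // cardsX cardsT card_ord.
have -> : #|~: S| = m - k by rewrite cardsCs finset.setCK card_ord cS.
move=> le.
apply: (@leq_trans (pdiv m * ((m - k) * g))); first by rewrite leq_mul2l le orbT.
have pg : pdiv m * g <= M * g by rewrite leq_mul2r pM orbT.
rewrite -mMg in pg.
by rewrite mulnCA leq_mul2l pg orbT.
Qed.


Lemma goodj d k (S : {set 'I_m}) (s : 'I_d -> 'I_m) (w : 'I_d -> nat) :
  #|S| = k -> d * m * (m - k) < pdiv m * (m - 1) -> (forall c, s c \in S) ->
  (forall c, w c < m) ->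
  exists j : 'I_m, 0 < j /\ forall c, res (s c) j (w c) \in S.
Proof.
move=> cS hyp sS wm.
pose B c := [set j : 'I_m | (0 < j) && (res (s c) j (w c) \notin S)]%SET.
have hB c : pdiv m * #|B c| <= (m - k) * m.
  apply: badcount; [exact: cS|exact: ltn_ord| |exact: wm].
  suff -> : Ordinal (ltn_pmod (s c) m0) = s c by [].
  by apply: ord_inj; rewrite /= modn_small.
pose U := \bigcup_(c : 'I_d) B c.
have hU : #|U| <= \sum_(c : 'I_d) #|B c|.
  rewrite /U; elim/big_ind2: _ => //; first by rewrite cards0.
  move=> s1 U1 s2 U2 h1 h2; apply: (leq_trans (leq_card_setU U1 U2).1).
  exact: leq_add.
have p0 : 0 < pdiv m by rewrite pdiv_gt0.
have hU2 : #|U| < m - 1.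
  rewrite -(ltn_pmul2l p0); apply: leq_ltn_trans hyp.
  apply: (leq_trans (leq_mul (leqnn _) hU)).
  rewrite big_distrr /=.
  apply: (@leq_trans (\sum_(c : 'I_d) (m - k) * m)); first exact: leq_sum.
  by rewrite sum_nat_const card_ord [((m - k) * m)%N]mulnC mulnA.
case: (@existsP _ (fun j : 'I_m => (0 < j) && [forall c, res (s c) j (w c) \in S])).
  by move=> [j /andP[j0 /forallP Hj]]; exists j.
move=> H; exfalso.
have sub : [set: 'I_m]%SET \subset U :|: [set Ordinal m0]%SET.
  apply/fintype.subsetP => j _; rewrite !inE.
  have [j0|j0] := posnP j.
    by apply/orP; right; apply/eqP; apply: ord_inj.
  have : ~~ [forall c, res (s c) j (w c) \in S].
    by apply/negP => hf; apply: H; exists j; rewrite j0 hf.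
  move=> /forallPn[c hc].
  apply/orP; left; apply/bigcupP; exists c => //.
  by rewrite inE j0.
have := subset_leq_card sub; rewrite cardsT card_ord.
move=> /leq_trans/(_ (leq_card_setU _ _).1); rewrite cards1.
move: hU2; set u := #|U|; move=> h1 h2; lia.
Qed.

End NT.

Local Open Scope ring_scope.
Local Open Scope classical_set_scope.

Section Hull.
Variables (R : realType) (d : nat).
Local Notation V := 'rV[R]_d.

Definition hull (G : set V) : set V :=
  [set x | forall C, convex_set C -> G `<=` C -> C x].

Lemma hull_sub (G : set V) : G `<=` hull G.
Proof. by move=> x Gx; rewrite /hull /= => C _ GC; apply: GC. Qed.

Lemma hull_min (G C : set V) : convex_set C -> G `<=` C -> hull G `<=` C.
Proof. by move=> cC GC x; apply. Qed.

Lemma hull_convex (G : set V) : convex_set (hull G).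
Proof.
move=> x y hx hy t t0 t1; rewrite /hull /= => C cC GC; apply: (cC) => //; [exact: (hx C cC GC)|exact: (hy C cC GC)].
Qed.

Lemma hull_mono (G G' : set V) : G `<=` G' -> hull G `<=` hull G'.
Proof. by move=> GG' x hx; rewrite /hull /= => C cC GC; apply: hx => // y /GG'/GC. Qed.

Lemma seg_in (C : set V) (u w : V) (t : R) : convex_set C -> C u -> C w -> 0 <= t -> t <= 1 ->
  C (u + t *: (w - u)).
Proof.
move=> cC Cu Cw t0 t1.
have -> : u + t *: (w - u) = t *: w + (1 - t) *: u.
  by apply/rowP => i; rewrite !mxE; ring.
exact: cC.
Qed.

Lemma hull_join (G : set V) (q x : V) : (exists g, G g) -> hull (G `|` [set q]) x ->
  exists l s, [/\ 0 <= l, l <= 1, hull G s & x = l *: q + (1 - l) *: s].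
Proof.
move=> [g Gg] hx.
pose J := [set y : V | exists l s, [/\ 0 <= l, l <= 1, hull G s & y = l *: q + (1 - l) *: s]].
suff : hull (G `|` [set q]) `<=` J by move=> /(_ x hx).
apply: hull_min.
- move=> x1 x2 [l1 [s1 [l10 l11 h1 ->]]] [l2 [s2 [l20 l21 h2 ->]]] t t0 t1.
  pose L := t * l1 + (1 - t) * l2.
  have L0 : 0 <= L by rewrite /L; nra.
  have L1 : L <= 1 by rewrite /L; nra.
  have [L1e|L1n] := eqVneq L 1.
    have e1 : t * (1 - l1) = 0 by move: L1e; rewrite /L => ?; nra.
    have e2 : (1 - t) * (1 - l2) = 0 by move: L1e; rewrite /L => ?; nra.
    exists 1, s1; split; rewrite ?ler01 ?lexx //.
    apply/rowP => i; rewrite !mxE.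
    move: e1 e2 L1e; rewrite /L => e1 e2 L1e.
    have -> : t * (l1 * q 0 i + (1 - l1) * s1 0 i) + (1 - t) * (l2 * q 0 i + (1 - l2) * s2 0 i)
      = (t * l1 + (1 - t) * l2) * q 0 i + (t * (1 - l1)) * s1 0 i + ((1 - t) * (1 - l2)) * s2 0 i by ring.
    by rewrite L1e e1 e2; ring.
  have L1' : 1 - L != 0 by rewrite subr_eq0 eq_sym.
  pose u := t * (1 - l1) / (1 - L).
  have u0 : 0 <= u by rewrite /u divr_ge0 //; nra.
  have u1 : u <= 1.
    rewrite /u ler_pdivrMr; last by rewrite subr_gt0 lt_neqAle L1 andbT.
    rewrite /L; nra.
  exists L, (u *: s1 + (1 - u) *: s2); split => //.
    exact: hull_convex.
  apply/rowP => i; rewrite !mxE /u /L.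
  move: L1'; rewrite /L => L1'.
  field; exact: L1'.
- move=> y [Gy|->].
    exists 0, y; split; rewrite ?ler01 ?lexx //.
      exact: hull_sub.
    by rewrite scale0r add0r subr0 scale1r.
  exists 1, g; split; rewrite ?ler01 ?lexx //.
    exact: hull_sub.
  by rewrite subrr scale0r addr0 scale1r.
Qed.


Lemma anti_exch (G : set V) (y q : V) : (exists g, G g) ->
  hull (G `|` [set y]) q -> hull (G `|` [set q]) y -> y != q -> hull G y.
Proof.
move=> Gne hq hy nyq.
have [mu [s2 [m0 m1 h2 eq]]] := hull_join Gne hq.
have [la [s1 [l0 l1 h1 ey]]] := hull_join Gne hy.
have [lm1|lm1] := eqVneq (la * mu) 1.
  have la1 : la = 1 by nra.
  have mu1 : mu = 1 by nra.
  move: ey nyq; rewrite la1 subrr scale0r addr0 scale1r => ->.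
  by rewrite eqxx.
have lmlt : la * mu < 1 by rewrite lt_neqAle lm1 /=; nra.
have nz : 1 - la * mu != 0 by rewrite subr_eq0 eq_sym.
pose u := (1 - la) / (1 - la * mu).
have u0 : 0 <= u by rewrite /u divr_ge0 //; nra.
have u1 : u <= 1.
  by rewrite /u ler_pdivrMr ?subr_gt0 //; nra.
suff -> : y = u *: s1 + (1 - u) *: s2 by exact: hull_convex.
apply/rowP => i.
have ey_i := congr1 (fun v : V => v 0 i) ey.
have eq_i := congr1 (fun v : V => v 0 i) eq.
rewrite !mxE in ey_i eq_i *.
rewrite eq_i in ey_i.
have h : y 0 i - (la * (mu * y 0 i + (1 - mu) * s2 0 i) + (1 - la) * s1 0 i) = 0.
  by rewrite -ey_i subrr.
have -> : y 0 i = ((1 - la) * s1 0 i + la * (1 - mu) * s2 0 i) / (1 - la * mu).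
  apply: (mulIf nz); rewrite divfK //.
  apply/eqP; rewrite -subr_eq0; apply/eqP; rewrite -h; ring.
rewrite /u; field; exact: nz.
Qed.

End Hull.

Section Key.
Variables (R : realType) (d : nat) (X : set 'rV[R]_d) (K : nat).
Local Notation V := 'rV[R]_d.

Definition gens n (Y : 'I_n -> V) (i : 'I_n) : set V :=
  [set y | exists2 j, j != i & y = Y j].
Definition good n (Y : 'I_n -> V) := exists x, X x /\ forall i, hull (gens Y i) x.

Hypothesis Hseg : forall n (Y : 'I_n -> V), (K < n)%N -> (forall i, X (Y i)) ->
  exists a b t, [/\ a != b, 0 < t, t < 1 & X (Y a + t *: (Y b - Y a))].
Hypothesis Hfin : forall n (Y0 : 'I_n -> V), exists (T : finType) (g : T -> V),
  forall x, X x -> hull (range Y0) x -> exists t, g t = x.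

Lemma key n (Y : 'I_n -> V) : (K < n)%N -> (forall i, X (Y i)) -> good Y.
Proof.
move=> Kn XY.
have [T [g Hg]] := Hfin Y.
pose P (Z : 'I_n -> V) := forall i, X (Z i) /\ hull (range Y) (Z i).
pose mu (Z : 'I_n -> V) := #|[set t : T | `[< hull (range Z) (g t) >]]%SET|.
suff: forall N Z, P Z -> (mu Z < N)%N -> good Z.
  move=> /(_ (mu Y).+1 Y); apply => // i; split => //; apply: hull_sub; by exists i.
elim=> [//|N IH] Z PZ muZ.
have hZY : hull (range Z) `<=` hull (range Y).
  apply: hull_min; first exact: hull_convex.
  by move=> _ [i _ <-]; exact: (PZ i).2.
have IH' : forall Z', P Z' -> hull (range Z') `<=` hull (range Z) ->
    (exists x, [/\ X x, hull (range Z) x & ~ hull (range Z') x]) -> good Z'.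
  move=> Z' PZ' sub [x [Xx hx nhx]].
  apply: IH => //.
  have [t gt] := Hg x Xx (hZY _ hx).
  have muZ' : (mu Z <= N)%N := muZ.
  apply: (leq_trans _ muZ'); rewrite /mu; apply: proper_card; rewrite properE; apply/andP; split.
    apply/fintype.subsetP => s; rewrite !inE => h; apply: sub; move: h; by rewrite ?asboolE.
  apply/fintype.subsetPn; exists t; rewrite !inE; first by rewrite ?asboolE gt.
  by apply/asboolPn; rewrite gt.
apply: contrapT => bad.
have XZ i : X (Z i) := (PZ i).1.
have rangeZ i : hull (range Z) (Z i) by apply: hull_sub; exists i.
have F1 : forall i, ~ hull (gens Z i) (Z i).
  move=> i hi; apply: bad; exists (Z i); split => // j.
  have [->//|ji] := eqVneq j i.
  by apply: hull_sub; exists i => //; rewrite eq_sym.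
have gensR i : gens Z i `<=` range Z by move=> _ [j _ ->]; exists j.
have F2 : forall a b t, 0 < t -> t < 1 -> forall i, i != a -> i != b ->
    hull (gens Z i) (Z a + t *: (Z b - Z a)).
  move=> a b t t0 t1 i ia ib; apply: seg_in (ltW t0) (ltW t1).
  - exact: hull_convex.
  - by apply: hull_sub; exists a; rewrite // eq_sym.
  - by apply: hull_sub; exists b; rewrite // eq_sym.
have step : forall a b t, a != b -> 0 < t -> t < 1 ->
    X (Z a + t *: (Z b - Z a)) -> ~ hull (gens Z a) (Z a + t *: (Z b - Z a)) -> False.
  move=> a b t ab t0 t1 Xz nz.
  set z := Z a + t *: (Z b - Z a) in Xz nz.
  have gaZb : gens Z a (Z b) by exists b; rewrite // eq_sym.
  have gbZa : gens Z b (Z a) by exists a.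
  have Zab : Z a != Z b.
    apply/eqP => e; apply: (F1 a); apply: hull_sub; exists b; by rewrite // eq_sym.
  have Zba : Z b != Z a by rewrite eq_sym.
  have hz : hull (range Z) z.
    rewrite /z; apply: seg_in (ltW t0) (ltW t1); [exact: hull_convex|exact: rangeZ|exact: rangeZ].
  have za : z != Z a.
    apply/eqP => e.
    have : t *: (Z b - Z a) = z - Z a by rewrite /z; apply/rowP => i; rewrite !mxE; ring.
    rewrite e subrr => /eqP; rewrite scaler_eq0 subr_eq0 (negbTE Zba) orbF.
    by rewrite gt_eqF.
  have zb : z != Z b.
    apply/eqP => e.
    have : (1 - t) *: (Z b - Z a) = Z b - z by rewrite /z; apply/rowP => i; rewrite !mxE; ring.
    rewrite e subrr => /eqP; rewrite scaler_eq0 subr_eq0 [_ - _ == 0]subr_eq0 (negbTE Zba) orbF.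
    by rewrite eq_sym lt_eqF.
  pose Z1 := fun i => if i == a then z else Z i.
  have PZ1 : P Z1.
    move=> i; rewrite /Z1; case: eqP => _; last exact: PZ.
    by split => //; exact: hZY.
  have sub1 : hull (range Z1) `<=` hull (range Z).
    apply: hull_min; first exact: hull_convex.
    by move=> _ [i _ <-]; rewrite /Z1; case: eqP.
  have r1 : range Z1 `<=` gens Z a `|` [set z].
    move=> _ [i _ <-]; rewrite /Z1; case: eqP => [_|/eqP ia]; first by right.
    by left; exists i.
  have nZa : ~ hull (range Z1) (Z a).
    move=> h; apply: (F1 a); apply: (@anti_exch _ _ _ _ z).
    - by exists (Z b).
    - apply: seg_in (ltW t0) (ltW t1); first exact: hull_convex.
        by apply: hull_sub; right.
      by apply: hull_sub; left.
    - exact: hull_mono h.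
    - by rewrite eq_sym.
  have [p [Xp hp]] : good Z1.
    by apply: IH' => //; exists (Z a).
  have p_a : hull (gens Z a) p.
    apply: hull_mono (hp a) => _ [j ja ->]; exists j => //; by rewrite /Z1 (negbTE ja).
  have p_i : forall i, i != a -> i != b -> hull (gens Z i) p.
    move=> i ia ib; apply: (@hull_min _ _ (gens Z1 i) (hull (gens Z i))) (hp i); first exact: hull_convex.
    move=> _ [j ji ->]; rewrite /Z1; case: eqP => [_|_]; first exact: F2.
    by apply: hull_sub; exists j.
  have np_b : ~ hull (gens Z b) p.
    move=> h; apply: bad; exists p; split => // i.
    have [->//|ia] := eqVneq i a.
    have [->//|ib] := eqVneq i b.
    exact: p_i.
  have pb : p != Z b.
    apply/eqP => e; apply: (F1 b); apply: (@anti_exch _ _ _ _ z).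
    - by exists (Z a).
    - apply: seg_in (ltW t0) (ltW t1); first exact: hull_convex.
        by apply: hull_sub; left.
      by apply: hull_sub; right.
    - rewrite -e; apply: hull_mono (hp b) => _ [j jb ->]; rewrite /Z1.
      case: eqP => _; first by right.
      by left; exists j.
    - by rewrite eq_sym.
  have hpZ : hull (range Z) p by exact: hull_mono p_a.
  pose Z3 := fun i => if i == b then p else Z i.
  have PZ3 : P Z3.
    move=> i; rewrite /Z3; case: eqP => _; last exact: PZ.
    by split => //; exact: hZY.
  have sub3 : hull (range Z3) `<=` hull (range Z).
    apply: hull_min; first exact: hull_convex.
    by move=> _ [i _ <-]; rewrite /Z3; case: eqP.
  have nZb : ~ hull (range Z3) (Z b).
    move=> h; apply: (F1 b); apply: (@anti_exch _ _ _ _ p).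
    - by exists (Z a).
    - apply: hull_mono hpZ => _ [i _ <-].
      have [->|ib] := eqVneq i b; first by right.
      by left; exists i.
    - apply: hull_mono h => _ [i _ <-]; rewrite /Z3.
      case: eqP => [_|/eqP ib]; first by right.
      by left; exists i.
    - by rewrite eq_sym.
  have [r [Xr hr]] : good Z3.
    by apply: IH' => //; exists (Z b).
  apply: bad; exists r; split => // i.
  have [->|ib] := eqVneq i b.
    apply: hull_mono (hr b) => _ [j jb ->]; exists j => //; by rewrite /Z3 (negbTE jb).
  apply: (@hull_min _ _ (gens Z3 i) (hull (gens Z i))) (hr i); first exact: hull_convex.
  move=> _ [j ji ->]; rewrite /Z3; case: eqP => [_|_].
    have [->//|ia] := eqVneq i a.
    exact: p_i.
  by apply: hull_sub; exists j.
have [a [b [t [ab t0 t1 Xz]]]] := Hseg Kn XZ.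
set z := Z a + t *: (Z b - Z a) in Xz.
have [i ni] : exists i, ~ hull (gens Z i) z.
  apply: contrapT => H; apply: bad; exists z; split => // i.
  by apply: contrapT => ?; apply: H; exists i.
have [ia|ia] := eqVneq i a; first by apply: (step a b t) => //; move: ni; rewrite ia.
have [ib|ib] := eqVneq i b; last by apply: ni; exact: F2.
have ez : z = Z b + (1 - t) *: (Z a - Z b).
  by rewrite /z; apply/rowP => j; rewrite !mxE; ring.
apply: (step b a (1 - t)); rewrite -?ez ?subr_gt0 // ?ltrBlDr ?ltrDl // 1?eq_sym //.
by move: ni; rewrite ib.
Qed.

End Key.

Section Helly.
Variables (R : realType) (d : nat) (X : set 'rV[R]_d) (K : nat).
Local Notation V := 'rV[R]_d.

Lemma helly_from_key :
  (forall n (Y : 'I_n -> V), (K < n)%N -> (forall i, X (Y i)) -> good X Y) ->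
  helly_prop X K.
Proof.
move=> Hk n; elim: n => [|n IH] F cF hyp.
  have [|x [Xx _]] := hyp [set: 'I_0]%SET; first by rewrite cardsT card_ord.
  by exists x; split => // -[].
have [nK|Kn] := leqP n.+1 K.
  have [|x [Xx Fx]] := hyp [set: 'I_n.+1]%SET; first by rewrite cardsT card_ord.
  by exists x; split => // i; apply: Fx; rewrite inE.
have ex : forall j : 'I_n.+1, exists y, X y /\ forall i, F (lift j i) y.
  move=> j; apply: (IH (fun i => F (lift j i))) => [i|I' cI'].
    exact: cF.
  have [|x [Xx Fx]] := hyp (lift j @: I'); first by rewrite card_imset //; exact: lift_inj.
  by exists x; split => // i iI; apply: Fx; apply: imset_f.
have [Y HY] := fin_all_exists ex.
have [x [Xx hx]] := Hk _ Y Kn (fun j => (HY j).1).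
exists x; split => // i.
apply: (@hull_min _ _ (gens Y i) (F i)) (hx i); first exact: cF.
move=> _ [j ji ->].
have [k ek _] := unlift_some ji.
by rewrite ek; exact: (HY j).2.
Qed.

End Helly.

Section Conc.
Variables (R : realType) (d m : nat) (S : {set 'I_m}).
Local Notation V := 'rV[R]_d.
Local Notation X := (@cart_pow R d (@residue_set R m S)).

Lemma nat_intr (n : nat) : (n%:Z)%:~R = n%:R :> R.
Proof. by rewrite -pmulrn. Qed.

Lemma Hfin_conc n (Y0 : 'I_n -> V) : exists (T : finType) (g : T -> V),
  forall x, X x -> hull (range Y0) x -> exists t, g t = x.
Proof.
pose N := (\max_(i < n) \max_(c < d) Num.bound `|Y0 i ord0 c|)%N.
have bnd : forall i c, `|Y0 i ord0 c| <= N%:R.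
  move=> i c; apply: ltW; apply: (lt_le_trans (archi_boundP (normr_ge0 _))).
  rewrite ler_nat; apply: (leq_trans _ (leq_bigmax i)).
  exact: (leq_bigmax (F := fun c => Num.bound `|Y0 i ord0 c|) c).
pose B := [set x : V | forall c, `|x ord0 c| <= N%:R].
have cB : convex_set B.
  move=> x y Bx By t t0 t1 c; rewrite !mxE.
  apply: (le_trans (ler_normD _ _)); rewrite !normrM (ger0_norm t0).
  rewrite (ger0_norm (_ : 0 <= 1 - t)); last by rewrite subr_ge0.
  have := Bx c; have := By c; nra.
have hB : hull (range Y0) `<=` B.
  by apply: hull_min => // _ [i _ <-] c; exact: bnd.
exists (Finite.clone {ffun 'I_d -> 'I_(N + N).+1} _).
exists (fun v : {ffun 'I_d -> 'I_(N + N).+1} => \row_c ((((v c : 'I_(N + N).+1) : nat)%:R : R) - N%:R)).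
move=> x Xx /hB Bx.
have ex : forall c, exists o : 'I_(N + N).+1, (o : nat)%:R - N%:R = x ord0 c.
  move=> c; have [s [z [_ exc]]] := Xx c; rewrite exc.
  pose e : int := s%:Z + m%:Z * z.
  have ee : (s%:R + m%:R * z%:~R : R) = e%:~R by rewrite /e intrD intrM !nat_intr.
  have := Bx c; rewrite exc ee -intr_norm -nat_intr ler_int => be.
  have hlt : (absz (e + N%:Z)%R < (N + N).+1)%N by lia.
  have heq : ((absz (e + N%:Z))%:Z = e + N%:Z) by lia.
  exists (Ordinal hlt); rewrite /= -nat_intr heq intrD.
  by rewrite addrK.
have [f Hf] := fin_all_exists ex.
by exists [ffun c => f c]; apply/rowP => c; rewrite !mxE ffunE Hf.
Qed.


Lemma Hseg_conc k : (2 <= m)%N -> #|S| = k ->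
  (d * m * (m - k) < pdiv m * (m - 1))%N ->
  forall n (Y : 'I_n -> V), (k ^ d < n)%N -> (forall i, X (Y i)) ->
  exists a b t, [/\ a != b, 0 < t, t < 1 & X (Y a + t *: (Y b - Y a))].
Proof.
move=> m2 cS hyp n Y kn XY.
have m0 : (0 < m)%N by apply: leq_trans m2.
have ex1 : forall i, exists f : {ffun 'I_d -> 'I_m}, (forall c, f c \in S) /\
    forall c, exists z : int, Y i ord0 c = (f c : nat)%:R + m%:R * z%:~R.
  move=> i.
  have : forall c, exists sz : 'I_m * int,
      sz.1 \in S /\ Y i ord0 c = (sz.1 : nat)%:R + m%:R * (sz.2)%:~R.
    by move=> c; have [s [z [sS e]]] := XY i c; exists (s, z).
  move=> /fin_all_exists [sz Hsz]; exists [ffun c => (sz c).1].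
  split => c; rewrite ffunE; first exact: (Hsz c).1.
  by exists (sz c).2; exact: (Hsz c).2.
have [cls Hcls] := fin_all_exists ex1.
have [a [b [ab eab]]] : exists a b, a != b /\ cls a = cls b.
  apply: contrapT => H.
  have inj : injective cls.
    move=> a b e; apply/eqP; apply: contrapT => /negP ne; apply: H.
    by exists a, b.
  have sub : [set cls i | i in 'I_n]%SET \subset ffun_on S.
    apply/fintype.subsetP => _ /imsetP[i _ ->]; apply/ffun_onP => c.
    exact: (Hcls i).1.
  have := subset_leq_card sub; rewrite card_imset // card_ord card_ffun_on cS card_ord.
  by rewrite leqNgt kn.
have [za Hza] := fin_all_exists (Hcls a).2.
have [zb Hzb] := fin_all_exists (Hcls b).2.
pose wint c := zb c - za c.
pose w c := absz (wint c %% m%:Z)%Z.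
have wE c : (w c)%:Z = (wint c %% m%:Z)%Z.
  have mz : m%:Z != 0 by lia.
  by rewrite /w gez0_abs // modz_ge0.
have wm c : (w c < m)%N.
  have : ((wint c %% m%:Z)%Z < m%:Z) by rewrite ltz_pmod.
  by rewrite -wE.
have [j [j0 Hj]] := goodj m0 cS hyp (fun c => (Hcls a).1 c) wm.
have mR : (m%:R : R) != 0 by rewrite pnatr_eq0 -lt0n.
exists a, b, (j%:R / m%:R); split => //.
- by rewrite divr_gt0 // ltr0n.
- by rewrite ltr_pdivrMr ?ltr0n // mul1r ltr_nat.
move=> c.
exists (res m0 (cls a c) j (w c)).
exists (za c + j%:Z * (wint c %/ m%:Z)%Z + ((cls a c + j * w c) %/ m)%N%:Z).
split; first exact: Hj.
set s := (cls a c : nat).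
have Ea := Hza c; have Eb := Hzb c.
rewrite -eab -/s in Eb.
rewrite -/s in Ea.
set q := ((s + j * w c) %/ m)%N.
set r := ((s + j * w c) %% m)%N.
have HQ : (s%:Z + j%:Z * (w c)%:Z = q%:Z * m%:Z + r%:Z).
  by rewrite -!PoszM -!PoszD -divn_eq.
have HW : wint c = (wint c %/ m%:Z)%Z * m%:Z + (w c)%:Z by rewrite wE -divz_eq.
have HI : s%:Z + m%:Z * za c + j%:Z * wint c =
    r%:Z + m%:Z * (za c + j%:Z * (wint c %/ m%:Z)%Z + q%:Z).
  rewrite {1}HW.
  have -> : s%:Z + m%:Z * za c + j%:Z * ((wint c %/ m%:Z)%Z * m%:Z + (w c)%:Z) =
     (s%:Z + j%:Z * (w c)%:Z) + m%:Z * (za c + j%:Z * (wint c %/ m%:Z)%Z) by ring.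
  rewrite HQ; ring.
have HR := congr1 (fun x : int => (x%:~R : R)) HI.
rewrite /= !intrD !intrM !nat_intr in HR.
rewrite /= !mxE Ea Eb -HR /wint intrB.
field; exact: mR.
Qed.

End Conc.


Theorem theorem3 (R : realType) (m k d : nat) (S : {set 'I_m}) :
  (2 <= m)%N -> (0 < k)%N -> (0 < d)%N ->
  (d * m * (m - k) < pdiv m * (m - 1))%N ->
  #|S| = k ->
  helly_number_le (@cart_pow R d (@residue_set R m S)) (k ^ d).
Proof.
move=> m2 k0 d0 hyp cS.
exists (k ^ d)%N; split => //.
apply: helly_from_key => n Y Kn XY.
apply: (@key _ _ _ (k ^ d)%N) => //.
- exact: Hseg_conc.
- exact: Hfin_conc.
Qed.
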